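(* Let $S$ be a finite semigroup. If $S$ is pseudo-nilpotent and the lower non-nilpotent graph $\mathcal{L}_S$ has no edges, then the upper non-nilpotent graph $\mathcal{N}_S$ has no edges.
   Context: For a semigroup $S$, $S^1$ denotes $S$ with an identity adjoined (if $S$ has none). For $x,y\in S$ and $z_1,z_2,\ldots\in S^1$ define recursively $\lambda_0=x$, $\rho_0=y$, $\lambda_{n+1}=\lambda_n z_{n+1}\rho_n$, $\rho_{n+1}=\rho_n z_{n+1}\lambda_n$; write $\lambda_n(x,y,z_1,\ldots,z_n)$ and $\rho_n(x,y,z_1,\ldots,z_n)$. A semigroup $S$ is nilpotent (in the sense of Mal'cev) if there is a positive integer $n$ with $\lambda_n(a,b,c_1,\ldots,c_n)=\rho_n(a,b,c_1,\ldots,c_n)$ for all $a,b\in S$ and $c_1,\ldots,c_n\in S^1$. $\langle X\rangle$ denotes the subsemigroup generated by $X$. The upper non-nilpotent graph $\mathcal{N}_S$ has vertex set $S$, with an edge between $x$ and $y$ iff $\langle x,y\rangle$ is not nilpotent. The lower non-nilpotent graph $\mathcal{L}_S$ has vertex set $S$, with an edge between distinct $x,y\in S$ iff there exist $n\ge 1$ and $w_1,\ldots,w_n\in\langle x,y\rangle^1$ with $x=\lambda_n(x,y,w_1,\ldots,w_n)$ and $y=\rho_n(x,y,w_1,\ldots,w_n)$. The empty set is regarded as an ideal; for an ideal $I$ of $S$, $S/I$ is the Rees factor semigroup, with $S/\emptyset=S$. A semigroup $S$ is pseudo-nilpotent if the following holds: whenever $x,y\in S$, $w_1,\ldots,w_m\in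 S^1$, $T$ is the subsemigroup generated by $x,y$ and those $w_i$ lying in $S$, $I$ is an ideal (possibly empty) of $T$, and $t<m$ are non-negative integers such that, writing $\lambda_k=\lambda_k(x,y,w_1,\ldots,w_k)$ and $\rho_k=\rho_k(x,y,w_1,\ldots,w_k)$, one has $\lambda_t\neq\rho_t$, $(\lambda_t,\rho_t)=(\lambda_m,\rho_m)$ and $\lambda_m,\rho_m\notin I$, then for every $0\le i\le m$ there is an edge in $\mathcal{N}_{T/I}$ between (the images of) $\lambda_i$ and $\rho_i$. *)

(* Defs.v *)
From mathcomp Require Import all_boot.
From Stdlib Require List.
Set Implicit Arguments. Unset Strict Implicit. Unset Printing Implicit Defensive.

(* Generic semigroup notions over a carrier type A with multiplication mul.
   Elements of S^1 are encoded as option A, with None = adjoined identity. *)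
Section Generic.
Variables (A : Type) (mul : A -> A -> A).

Definition mul3 (a : A) (z : option A) (b : A) : A :=
  match z with None => mul a b | Some c => mul (mul a c) b end.

Definition lamrho (x y : A) (zs : seq (option A)) : A * A :=
  foldl (fun p z => (mul3 p.1 z p.2, mul3 p.2 z p.1)) (x, y) zs.

Definition in1 (U : A -> Prop) (z : option A) : Prop :=
  match z with None => True | Some c => U c end.

Inductive gen (X : A -> Prop) : A -> Prop :=
| gen_base a : X a -> gen X a
| gen_mul a b : gen X a -> gen X b -> gen X (mul a b).

(* Mal'cev nilpotency of the subsemigroup U *)
Definition nilpotent_sub (U : A -> Prop) : Prop :=
  exists n, 0 < n /\
    forall a b, U a -> U b -> forall cs : seq (option A),
      size cs = n -> List.Forall (in1 U) cs ->
      (lamrho a b cs).1 = (lamrho a b cs).2.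

Definition pair_set (x y : A) : A -> Prop := fun a => a = x \/ a = y.

Definition upper_edge (x y : A) : Prop := ~ nilpotent_sub (gen (pair_set x y)).

Definition lower_edge (x y : A) : Prop :=
  x <> y /\ exists ws : seq (option A),
    0 < size ws /\ List.Forall (in1 (gen (pair_set x y))) ws /\ lamrho x y ws = (x, y).

(* I (possibly empty) is an ideal of the subsemigroup T *)
Definition is_ideal_of (T : A -> Prop) (I : pred A) : Prop :=
  (forall a, I a -> T a) /\
  (forall a b, T a -> I b -> I (mul a b) /\ I (mul b a)).
End Generic.

(* Rees factor T/I, modelled on option A: Some a is the class of a in T \ I,
   None is the zero (only reachable when I is nonempty). *)
Definition rees (A : Type) (mul : A -> A -> A) (I : pred A)
  (a b : option A) : option A :=
  match a, b with
  | Some a, Some b => if I (mul a b) then None else Some (mul a b)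
  | _, _ => None
  end.

Definition rees_img (A : Type) (I : pred A) (a : A) : option A :=
  if I a then None else Some a.

Definition pseudo_nilpotent (A : Type) (mul : A -> A -> A) : Prop :=
  forall (x y : A) (ws : seq (option A)) (I : pred A) (t : nat),
    let T := gen mul (fun a => a = x \/ a = y \/ List.In (Some a) ws) in
    is_ideal_of mul T I ->
    t < size ws ->
    (lamrho mul x y (take t ws)).1 <> (lamrho mul x y (take t ws)).2 ->
    lamrho mul x y (take t ws) = lamrho mul x y ws ->
    ~~ I (lamrho mul x y ws).1 -> ~~ I (lamrho mul x y ws).2 ->
    forall i, i <= size ws ->
      upper_edge (rees mul I)
        (rees_img I (lamrho mul x y (take i ws)).1)
        (rees_img I (lamrho mul x y (take i ws)).2).

(* Main.v *)
Require Import Defs.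
From mathcomp Require Import all_boot.
From mathcomp Require Import zify.
From Stdlib Require Import Classical ClassicalEpsilon.
From Stdlib Require List.
Set Implicit Arguments. Unset Strict Implicit. Unset Printing Implicit Defensive.

Section Aux.
Variables (A : Type) (mul : A -> A -> A).

Lemma gen_sub (X V : A -> Prop) : (forall a, X a -> V a) ->
  (forall a b, V a -> V b -> V (mul a b)) -> forall a, gen mul X a -> V a.
Proof. move=> HX HV a; elim=> [c /HX //|c d _ Hc _ Hd]; exact: HV. Qed.

Lemma lamrho_cons x y z zs :
  lamrho mul x y (z :: zs) = lamrho mul (mul3 mul x z y) (mul3 mul y z x) zs.
Proof. by []. Qed.

Lemma lamrho_cat x y s1 s2 : lamrho mul x y (s1 ++ s2) =
  lamrho mul (lamrho mul x y s1).1 (lamrho mul x y s1).2 s2.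
Proof. rewrite /lamrho foldl_cat; by case: (foldl _ _ s1). Qed.

Lemma lamrho_eq zs u : (lamrho mul u u zs).1 = (lamrho mul u u zs).2.
Proof. elim: zs u => [|z zs IH] u //=. rewrite lamrho_cons; exact: IH. Qed.

Lemma in1_mono (U V : A -> Prop) z : (forall a, U a -> V a) -> in1 U z -> in1 V z.
Proof. by case: z => //= c H /H. Qed.

Lemma lamrho_in (X : A -> Prop) zs a b : gen mul X a -> gen mul X b ->
  List.Forall (in1 (gen mul X)) zs ->
  gen mul X (lamrho mul a b zs).1 /\ gen mul X (lamrho mul a b zs).2.
Proof.
elim: zs a b => [|z zs IH] a b Ha Hb Hf //=.
inversion Hf as [|z' zs' Hz Hzs]; subst. rewrite lamrho_cons. apply: IH => //.
- case: z Hz {Hf} => [c|] /= Hc; repeat apply: gen_mul => //.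
- case: z Hz {Hf} => [c|] /= Hc; repeat apply: gen_mul => //.
Qed.

Lemma Forall_take (P : option A -> Prop) n s : List.Forall P s -> List.Forall P (take n s).
Proof.
elim: s n => [|z s IH] [|n] /= H; try by constructor.
inversion H; subst; constructor; auto.
Qed.

Lemma Forall_drop (P : option A -> Prop) n s : List.Forall P s -> List.Forall P (drop n s).
Proof.
elim: s n => [|z s IH] [|n] //= H. inversion H; subst; auto.
Qed.

Definition jj (z : option (option A)) : option A :=
  match z with Some u => u | None => None end.

Lemma lamrho_rees cs a b : List.Forall (fun z => z <> Some None) cs ->
  lamrho (rees mul xpred0) (Some a) (Some b) cs =
  (Some (lamrho mul a b (map jj cs)).1, Some (lamrho mul a b (map jj cs)).2).
Proof.
elim: cs a b => [|z cs IH] a b Hf //=.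
inversion Hf as [|z' zs' Hz Hzs]; subst. rewrite lamrho_cons.
case: z Hz Hf => [[c|]|] //= _ _; exact: IH.
Qed.

Lemma gen_rees (a b : A) u :
  gen (rees mul xpred0) (pair_set (Some a) (Some b)) u ->
  exists v, u = Some v /\ gen mul (pair_set a b) v.
Proof.
elim=> [c Hc|c d _ [v1 [-> H1]] _ [v2 [-> H2]]].
- case: Hc => ->; [exists a | exists b]; split => //; apply: gen_base; by [left|right].
- exists (mul v1 v2); split => //; exact: gen_mul.
Qed.

Lemma forall_rees (a b : A) cs :
  List.Forall (in1 (gen (rees mul xpred0) (pair_set (Some a) (Some b)))) cs ->
  List.Forall (fun z => z <> Some None) cs /\
  List.Forall (in1 (gen mul (pair_set a b))) (map jj cs).
Proof.
elim: cs => [|z cs IH] H /=; first by split; constructor.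
inversion H as [|z' zs' H1 H2]; subst. have [H3 H4] := IH H2.
split; constructor => //.
- case: z H1 {H} => // [[c|]] //= /gen_rees [v [//]].
- case: z H1 {H} => [u|] //= /gen_rees [v [-> //]].
Qed.

Lemma transfer (a b : A) :
  upper_edge (rees mul xpred0) (Some a) (Some b) -> upper_edge mul a b.
Proof.
move=> Hu [n [Hn H]]; apply: Hu; exists n; split => // A1 B1 HA HB cs Hs Hf.
have [a1 [-> Ha1]] := gen_rees HA.
have [b1 [-> Hb1]] := gen_rees HB.
have [F1 F2] := forall_rees Hf.
rewrite lamrho_rees //=; congr Some; apply: H => //; by rewrite size_map.
Qed.

End Aux.

Section Main.
Variables (S : finType) (mul : S -> S -> S).

Definition gb (x y z : S) : bool :=
  if excluded_middle_informative (gen mul (pair_set x y) z) then true else false.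

Lemma gbP x y z : gb x y z <-> gen mul (pair_set x y) z.
Proof. rewrite /gb; case: excluded_middle_informative => //. Qed.

Lemma cyc (X : S -> Prop) a b cs t m :
  let U := gen mul X in
  U a -> U b -> List.Forall (in1 U) cs -> (lamrho mul a b cs).1 <> (lamrho mul a b cs).2 ->
  t < m -> m <= size cs -> lamrho mul a b (take t cs) = lamrho mul a b (take m cs) ->
  exists x' y' ws, x' <> y' /\ U x' /\ U y' /\ 0 < size ws /\
     List.Forall (in1 U) ws /\ lamrho mul x' y' ws = (x', y').
Proof.
move=> U Ha Hb Hf Hne Htm Hm Heq.
set p := lamrho mul a b (take t cs).
have Hsplit : take m cs = take t cs ++ drop t (take m cs).
  by rewrite -{1}(cat_take_drop t (take m cs)) take_takel // ltnW.
have [Up1 Up2] := lamrho_in Ha Hb (Forall_take t Hf).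
exists p.1, p.2, (drop t (take m cs)); split; [|split;[|split;[|split;[|split]]]] => //.
- move=> E; apply: Hne.
  rewrite -(cat_take_drop t cs) lamrho_cat -/p E; exact: lamrho_eq.
- rewrite size_drop size_take; case: ifP => _; lia.
- exact: Forall_drop (Forall_take _ Hf).
- rewrite -lamrho_cat -Hsplit -Heq /p; by case: (lamrho _ _ _ _).
Qed.

Hypothesis Hpn : pseudo_nilpotent mul.
Hypothesis Hlow : forall x y : S, ~ lower_edge mul x y.

Lemma core x y : upper_edge mul x y -> exists x' y', upper_edge mul x' y' /\
  #|[pred z | gb x' y' z]| < #|[pred z | gb x y z]|.
Proof.
move=> Hu.
set U := gen mul (pair_set x y).
set N := #|{: S * S}|.
have [a [b [cs [Ha [Hb [Hs [Hf Hne]]]]]]] : exists a b cs, U a /\ U b /\ size cs = N.+1 /\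
    List.Forall (in1 U) cs /\ (lamrho mul a b cs).1 <> (lamrho mul a b cs).2.
  apply: NNPP => Hn; apply: Hu; exists N.+1; split => // a b Ha Hb cs Hs Hf.
  apply: NNPP => E; apply: Hn; exists a, b, cs; tauto.
pose f := fun i : 'I_N.+2 => lamrho mul a b (take i cs).
have [i [j [Hij Efij]]] : exists i j : 'I_N.+2, i <> j /\ f i = f j.
  apply: NNPP => H.
  have Hinj : injective f by move=> i j E; apply: NNPP => Hij; apply: H; exists i, j.
  have := leq_card f Hinj; rewrite card_ord -/N; lia.
have Hc : forall t m : 'I_N.+2, t < m -> f t = f m -> exists x' y' ws, x' <> y' /\ U x' /\ U y' /\ 0 < size ws /\
     List.Forall (in1 U) ws /\ lamrho mul x' y' ws = (x', y').
  move=> t m Htm E; apply: (@cyc _ a b cs t m) => //.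
  by rewrite Hs -ltnS.
have [x' [y' [ws [Hxy [Ux [Uy [Hsz [Hws Hl]]]]]]]] : exists x' y' ws, x' <> y' /\ U x' /\ U y' /\ 0 < size ws /\
     List.Forall (in1 U) ws /\ lamrho mul x' y' ws = (x', y').
  case: (ltngtP i j) => H.
  - exact: Hc H Efij.
  - exact: Hc H (esym Efij).
  - by move/val_inj: H.
have Hup : upper_edge mul x' y'.
  apply: transfer.
  have := Hpn (x := x') (y := y') (ws := ws) (I := xpred0) (t := 0).
  rewrite take0 => /= H.
  have HI : is_ideal_of mul
      (gen mul (fun a : S => a = x' \/ a = y' \/ List.In (Some a) ws)) xpred0 by split.
  have := H HI Hsz Hxy (esym Hl) isT isT 0 (leq0n _); by rewrite take0.
have Hsub : forall z, gen mul (pair_set x' y') z -> U z.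
  by apply: gen_sub => [c [->|->] //|]; exact: gen_mul.
exists x', y'; split => //.
have sAB : [pred z | gb x' y' z] \subset [pred z | gb x y z].
  apply/subsetP => z; rewrite !inE => /gbP /Hsub /gbP //.
case: (ltnP #|[pred z | gb x' y' z]| #|[pred z | gb x y z]|) => // Hge.
exfalso; apply: (Hlow (x := x') (y := y')); split => //; exists ws; split => //; split => //.
have := subset_leqif_card sAB; case=> Hle Heqc.
have sBA : [pred z | gb x y z] \subset [pred z | gb x' y' z].
  by rewrite -Heqc eqn_leq Hle Hge.
apply: List.Forall_impl Hws => z; apply: in1_mono => c /gbP Hc0.
by apply/gbP; move/subsetP: sBA; apply; rewrite inE.
Qed.

End Main.

Theorem proposition2p6 (S : finType) (mul : S -> S -> S) :
  associative mul ->
  pseudo_nilpotent mul ->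
  (forall x y : S, ~ lower_edge mul x y) ->
  forall x y : S, ~ upper_edge mul x y.
Proof.
move=> _ Hpn Hlow x y.
move: {2}_.+1 (ltnSn #|[pred z | gb mul x y z]|) => k.
elim: k x y => // k IH x y Hk Hu.
have [x' [y' [Hu' Hlt]]] := core Hpn Hlow Hu.
apply: (IH x' y') => //; exact: leq_trans Hlt Hk.
Qed.
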